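(* Let $k\ge3$, $1\le s\le k$, $r\le\min\{n_1,\dots,n_s\}$, $\mathcal A\in\mathbb R^{n_1}\otimes\cdots\otimes\mathbb R^{n_k}$ nonzero, and let $\{U_{[p]}\}$ be generated by the iAPD-ALS algorithm (described in the context). Then the number of columns of the matrices $U^{(i)}_{[p]}$ is eventually constant, equal to some positive integer $t\le r$, and there exists $N_0$ such that $f(U_{[p]})$ is nondecreasing in $p$ for all $p\ge N_0$.
   Context: Notation. $\mathrm V(m,n)=\{U\in\mathbb R^{n\times m}:U^{\mathsf T}U=I_m\}$; $\mathrm B(m,n)$: $n\times m$ real matrices with unit columns. $\mathcal A\tau(\mathbf u_1,\dots,\mathbf u_k)=\langle\mathcal A,\mathbf u_1\otimes\cdots\otimes\mathbf u_k\rangle$; $\mathcal A\tau_i(\mathbf u_1,\dots,\mathbf u_k)\in\mathbb R^{n_i}$ is the contraction of $\mathcal A$ with all $\mathbf u_l$, $l\ne i$. For $U=(U^{(1)},\dots,U^{(k)})$ with columns $\mathbf u^{(i)}_j$, $j\le t$: $f(U)=\sum_j\mathcal A\tau(\mathbf u^{(1)}_j,\dots,\mathbf u^{(k)}_j)^2$. $\operatorname{Polar}(X)$ is the set of $Q\in\mathrm V(m,n)$ maximizing $\langle Q,X\rangle$. iAPD-ALS algorithm (input $\mathcal A$, $r$, $\epsilon>0$). Choose $U_{[0]}\in\mathrm V(r,n_1)\times\cdots\times\mathrm V(r,n_s)\times\mathrm B(r,n_{s+1})\times\cdots\times\mathrm B(r,n_k)$ with $f(U_{[0]})>0$ and $\kappa\in(0,\sqrt{f(U_{[0]})/r})$.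 For $p=1,2,\dots$ ($t$ = current number of columns, $\mathbf u^{(i)}_{j,[q]}$ = $j$-th column of $U^{(i)}_{[q]}$), let $\mathbf x^i_{j,[p]}=(\mathbf u^{(1)}_{j,[p]},\dots,\mathbf u^{(i-1)}_{j,[p]},\mathbf u^{(i)}_{j,[p-1]},\dots,\mathbf u^{(k)}_{j,[p-1]})$, $\lambda^{i-1}_{j,[p]}=\mathcal A\tau(\mathbf x^i_{j,[p]})$, $\Lambda^{(i)}_{[p]}=\operatorname{diag}(\lambda^{i-1}_{j,[p]})_j$, $V^{(i)}_{[p]}=[\mathcal A\tau_i(\mathbf x^i_{j,[p]})]_j$. (1) For $i=1,\dots,s$ in turn pick $U^{(i)}_{[p]}\in\operatorname{Polar}(V^{(i)}_{[p]}\Lambda^{(i)}_{[p]})$, and if the smallest eigenvalue of $(U^{(i)}_{[p]})^{\mathsf T}V^{(i)}_{[p]}\Lambda^{(i)}_{[p]}$ is $<\epsilon$, instead pick $U^{(i)}_{[p]}\in\operatorname{Polar}(V^{(i)}_{[p]}\Lambda^{(i)}_{[p]}+\epsilon U^{(i)}_{[p-1]})$. (2) Truncation: with $J=\{j:|((U^{(s)}_{[p]})^{\mathsf T}V^{(s)}_{[p]})_{jj}|<\kappa\}$, delete columns in $J$ from $U^{(1)}_{[p]},\dots,U^{(s)}_{[p]}$ and $U^{(s+1)}_{[p-1]},\dots,U^{(k)}_{[p-1]}$ and set $t:=t-|J|$. (3) For $i=s+1,\dots,k$ in turn, $\mathbf u^{(i)}_{j,[p]}=\operatorname{sgn}(\lambda^{i-1}_{j,[p]})\mathcal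 A\tau_i(\mathbf x^i_{j,[p]})/\|\mathcal A\tau_i(\mathbf x^i_{j,[p]})\|$. Set $U_{[p]}=(U^{(1)}_{[p]},\dots,U^{(k)}_{[p]})$ and iterate indefinitely. *)

(* Defs.v *)
From HB Require Import structures.
From mathcomp Require Import all_boot all_order all_algebra.
From mathcomp Require Import reals.
Set Implicit Arguments. Unset Strict Implicit. Unset Printing Implicit Defensive.
Import Order.TTheory GRing.Theory Num.Theory.
Local Open Scope ring_scope.

(* Conventions: modes are 0-based, indexed by 'I_k; mode i has dimension n i.
   A "column" c : kcol R n is the k-tuple (u^{(1)}_j, ..., u^{(k)}_j) of the j-th
   columns of the factor matrices; a state U = (U^{(1)},...,U^{(k)}) with t
   columns is a sequence of t such columns. *)

Section Defs.
Variables (R : realType) (k : nat) (n : 'I_k -> nat).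

Definition multi_index := {dffun forall i : 'I_k, 'I_(n i)}.
Definition tensor := {ffun multi_index -> R}.
Definition kcol := forall i : 'I_k, 'cV[R]_(n i).
Definition col0 : kcol := fun i => 0.

Definition tau (A : tensor) (x : kcol) : R :=
  \sum_(idx : multi_index) A idx * \prod_(l : 'I_k) x l (idx l) 0.

Definition taui (A : tensor) (x : kcol) (i : 'I_k) : 'cV[R]_(n i) :=
  \col_(a < n i) \sum_(idx : multi_index | idx i == a)
      A idx * \prod_(l : 'I_k | l != i) x l (idx l) 0.

Definition fobj (A : tensor) (U : seq kcol) : R := \sum_(c <- U) (tau A c) ^+ 2.

Definition mx_of (U : seq kcol) (i : 'I_k) : 'M[R]_(n i, size U) :=
  \matrix_(a < n i, j < size U) (nth col0 U j) i a 0.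

Definition Vmat (A : tensor) (U : seq kcol) (i : 'I_k) : 'M[R]_(n i, size U) :=
  \matrix_(a < n i, j < size U) taui A (nth col0 U j) i a 0.
Definition lamrow (A : tensor) (U : seq kcol) : 'rV[R]_(size U) :=
  \row_(j < size U) tau A (nth col0 U j).

Definition upd_mode (U : seq kcol) (i : 'I_k) (M : 'M[R]_(n i, size U)) : seq kcol :=
  [seq @dfwith _ (fun l => 'cV[R]_(n l)) (nth col0 U j) i (col j M)
  | j : 'I_(size U) <- enum 'I_(size U)].

Definition vnorm m (v : 'cV[R]_m) : R := Num.sqrt (\sum_(a < m) (v a 0) ^+ 2).
End Defs.

Definition orthonormal_cols (R : realType) p m (Q : 'M[R]_(p, m)) : Prop :=
  Q^T *m Q = 1%:M.

Definition polar (R : realType) p m (X Q : 'M[R]_(p, m)) : Prop :=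
  orthonormal_cols Q /\
  forall Q' : 'M[R]_(p, m), orthonormal_cols Q' -> \tr (Q'^T *m X) <= \tr (Q^T *m X).

Definition small_eig (R : realType) m (M : 'M[R]_m) (eps : R) : Prop :=
  exists a : R, eigenvalue M a /\ a < eps.

Section Algo.
Variables (R : realType) (k : nat) (n : 'I_k -> nat).

(* Step (1) for one mode i <= s: from the current state U (modes < i already
   updated at iteration p, modes >= i from iteration p-1) to U'. *)
Definition polar_step (A : tensor R n) (eps : R) (i : 'I_k) (U U' : seq (kcol R n)) : Prop :=
  let X := Vmat A U i *m diag_mx (lamrow A U) in
  exists Q : 'M[R]_(n i, size U),
    polar X Q /\
    (small_eig (Q^T *m X) eps ->
       exists Q2 : 'M[R]_(n i, size U),
         polar (X + eps *: mx_of U i) Q2 /\ U' = upd_mode Q2) /\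
    (~ small_eig (Q^T *m X) eps -> U' = upd_mode Q).

(* Step (2): truncation.  prev = state before updating mode s (so that
   V^{(s)} = [A tau_s(x^s_j)]_j is computed from it), cur = after.  Column j is
   kept iff |((U^{(s)})^T V^{(s)})_{jj}| >= kappa. *)
Definition truncate (A : tensor R n) (smax : 'I_k) (kappa : R)
    (prev cur : seq (kcol R n)) : seq (kcol R n) :=
  [seq pc.2 | pc : kcol R n * kcol R n <- zip prev cur &
     kappa <= `| \sum_(a < n smax) pc.2 smax a 0 * taui A pc.1 smax a 0 |].

Definition als_update (A : tensor R n) (smax : 'I_k) (c : kcol R n) : kcol R n :=
  foldl (fun (c : kcol R n) (i : 'I_k) =>
           if (smax < i)%N then
             @dfwith _ (fun l => 'cV[R]_(n l)) c i
               ((Num.sg (tau A c) / vnorm (taui A c i)) *: taui A c i)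
           else c)
        c (enum 'I_k).

(* One iteration p of iAPD-ALS (smax = s - 1 is the 0-based index of mode s). *)
Definition iapd_step (A : tensor R n) (smax : 'I_k) (eps kappa : R)
    (U U' : seq (kcol R n)) : Prop :=
  exists curs : nat -> seq (kcol R n),
    curs 0%N = U /\
    (forall i : 'I_k, (i <= smax)%N -> polar_step A eps i (curs i) (curs i.+1)) /\
    U' = map (als_update A smax) (truncate A smax kappa (curs smax) (curs smax.+1)).

Definition init_ok (smax : 'I_k) (r : nat) (U : seq (kcol R n)) : Prop :=
  size U = r /\
  (forall i : 'I_k, (i <= smax)%N -> orthonormal_cols (mx_of U i)) /\
  (forall i : 'I_k, (smax < i)%N -> forall j : 'I_(size U), vnorm (col j (mx_of U i)) = 1).
End Algo.

(* Main.v *)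
Require Import Defs.
From HB Require Import structures.
From mathcomp Require Import all_boot all_order all_algebra.
From mathcomp Require Import reals.
From mathcomp Require Import ring lra zify.
From Stdlib Require Import Classical_Prop.
Import Order.TTheory GRing.Theory Num.Theory.
Local Open Scope ring_scope.

Set Implicit Arguments. Unset Strict Implicit. Unset Printing Implicit Defensive.


Definition dotv (R : realType) m (u v : 'cV[R]_m) : R := \sum_(a < m) u a 0 * v a 0.

Lemma dotvC (R : realType) m (u v : 'cV[R]_m) : dotv u v = dotv v u.
Proof. by apply: eq_bigr => a _; rewrite mulrC. Qed.

Lemma dotv_ge0 (R : realType) m (u : 'cV[R]_m) : 0 <= dotv u u.
Proof. by apply: sumr_ge0 => a _; rewrite -expr2 sqr_ge0. Qed.

Lemma dotvZl (R : realType) m (a : R) (u v : 'cV[R]_m) : dotv (a *: u) v = a * dotv u v.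
Proof. rewrite /dotv big_distrr /=; apply: eq_bigr => b _. rewrite mxE. exact: (esym (mulrA _ _ _)). Qed.

Lemma prod_sums (R : realType) m (x y : 'I_m -> R) :
  (\sum_i x i) * (\sum_j y j) = \sum_i \sum_j x i * y j.
Proof. by rewrite mulr_suml; apply: eq_bigr => i _; rewrite mulr_sumr. Qed.

Lemma cauchy_schwarz (R : realType) m (u v : 'cV[R]_m) :
  dotv u v ^+ 2 <= dotv u u * dotv v v.
Proof.
pose a : 'I_m -> R := fun i => u i 0; pose b : 'I_m -> R := fun i => v i 0.
have Eu : dotv u u = \sum_i a i ^+ 2 by apply: eq_bigr => i _; rewrite expr2.
have Ev : dotv v v = \sum_i b i ^+ 2 by apply: eq_bigr => i _; rewrite expr2.
have Euv : dotv u v = \sum_i a i * b i by [].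
have E1 : \sum_i \sum_j (a i * b j - a j * b i) ^+ 2 =
   \sum_i \sum_j (a i ^+ 2 * b j ^+ 2) + \sum_i \sum_j (b i ^+ 2 * a j ^+ 2)
   - 2 * \sum_i \sum_j (a i * b i * (a j * b j)).
  rewrite mulr_sumr -big_split -sumrB; apply: eq_bigr => i _.
  rewrite mulr_sumr -big_split -sumrB; apply: eq_bigr => j _; rewrite /=; ring.
rewrite -!prod_sums -Eu -Ev -Euv in E1.
have : 0 <= \sum_i \sum_j (a i * b j - a j * b i) ^+ 2.
  by apply: sumr_ge0 => i _; apply: sumr_ge0 => j _; apply: sqr_ge0.
rewrite E1 expr2; nra.
Qed.

Lemma tau_split (R : realType) k (n : 'I_k -> nat) (A : tensor R n) (c : kcol R n) (i : 'I_k) :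
  tau A c = dotv (c i) (taui A c i).
Proof.
rewrite /tau /dotv.
under eq_bigr do rewrite (bigD1 i) //=.
rewrite (partition_big (fun idx : multi_index n => idx i) predT) //=.
apply: eq_bigr => a _; rewrite mxE big_distrr /=.
apply: eq_bigr => idx /eqP <-; ring.
Qed.

Lemma taui_ext (R : realType) k (n : 'I_k -> nat) (A : tensor R n) (c d : kcol R n) (i : 'I_k) :
  (forall l, l != i -> c l = d l) -> taui A c i = taui A d i.
Proof.
move=> H; apply/matrixP => a b; rewrite !mxE; apply: eq_bigr => idx _.
by congr (_ * _); apply: eq_bigr => l /H ->.
Qed.

Lemma dfwith_other0 (R : realType) k (n : 'I_k -> nat) (c : kcol R n) i (w : 'cV[R]_(n i)) l :
  l != i -> @dfwith _ (fun l => 'cV[R]_(n l)) c i w l = c l.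
Proof. by move=> H; rewrite dfwith_out // eq_sym. Qed.

Lemma tau_dfwith (R : realType) k (n : 'I_k -> nat) (A : tensor R n) (c : kcol R n) i (w : 'cV[R]_(n i)) :
  tau A (@dfwith _ (fun l => 'cV[R]_(n l)) c i w) = dotv w (taui A c i).
Proof.
rewrite (tau_split _ _ i) dfwith_in; congr dotv.
by apply: taui_ext => l; apply: dfwith_other0.
Qed.


Definition ONv (R : realType) m (s : seq 'cV[R]_m) : bool :=
  all (fun v => dotv v v == 1) s && pairwise (fun v w => dotv v w == 0) s.

Lemma mulTmx_entry (R : realType) m p (M : 'M[R]_(m, p)) j j' :
  (M^T *m M) j j' = dotv (col j M) (col j' M).
Proof. by rewrite mxE; apply: eq_bigr => a _; rewrite !mxE. Qed.

Lemma ONv_cols (R : realType) m p (M : 'M[R]_(m, p)) :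
  ONv (map (fun j => col j M) (enum 'I_p)) <-> orthonormal_cols M.
Proof.
rewrite /ONv /orthonormal_cols all_map pairwise_map; split.
  case/andP => /allP Hall Hp0.
  apply/matrixP => j j'; rewrite mulTmx_entry !mxE.
  have /pairwiseP Hp := Hp0; move: {Hp0} (Hp j).
  case: (ltngtP j j') => [ljj'|lj'j|ejj'].
  - have -> : (j == j') = false by apply/eqP=> E; move: ljj'; rewrite E ltnn.
    move=> /(_ j j'); rewrite !inE size_enum_ord !ltn_ord !nth_ord_enum.
    by move=> /(_ isT isT ljj') /eqP.
  - have -> : (j == j') = false by apply/eqP=> E; move: lj'j; rewrite E ltnn.
    rewrite dotvC.
    move=> /(_ j' j); rewrite !inE size_enum_ord !ltn_ord !nth_ord_enum.
    by move=> /(_ isT isT lj'j) /eqP.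
  - move=> _; have -> : j' = j by apply: val_inj.
    by rewrite eqxx; apply/eqP; apply: (Hall j); rewrite mem_enum.
move=> HM; apply/andP; split.
  apply/allP => j _ /=; by rewrite -mulTmx_entry HM !mxE eqxx.
have := enum_uniq 'I_p; rewrite uniq_pairwise; apply: sub_pairwise => j j' /= neq.
by rewrite -mulTmx_entry HM !mxE (negbTE neq).
Qed.


Definition modeseq (R : realType) k (n : 'I_k -> nat) (U : seq (kcol R n)) (l : 'I_k)
  : seq 'cV[R]_(n l) := map (fun c => c l) U.

Lemma enum_nth_mode (R : realType) k (n : 'I_k -> nat) (U : seq (kcol R n)) l :
  map (fun j : 'I_(size U) => nth (Defs.col0 R n) U j l) (enum 'I_(size U)) = modeseq U l.
Proof.
rewrite -[RHS](mkseq_nth (Defs.col0 R n l)) /mkseq size_map -val_enum_ord -map_comp.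
by apply: eq_map => j /=; rewrite (nth_map (Defs.col0 R n)).
Qed.

Lemma col_mx_of (R : realType) k (n : 'I_k -> nat) (U : seq (kcol R n)) i (j : 'I_(size U)) :
  col j (mx_of U i) = nth (Defs.col0 R n) U j i.
Proof. by apply/matrixP => a b; rewrite !mxE (ord1 b). Qed.

Lemma modeseq_mx (R : realType) k (n : 'I_k -> nat) (U : seq (kcol R n)) i :
  modeseq U i = map (fun j => col j (mx_of U i)) (enum 'I_(size U)).
Proof. by rewrite -enum_nth_mode; apply: eq_map => j; rewrite col_mx_of. Qed.

Lemma ON_mx (R : realType) k (n : 'I_k -> nat) (U : seq (kcol R n)) i :
  ONv (modeseq U i) <-> orthonormal_cols (mx_of U i).
Proof. by rewrite modeseq_mx; apply: ONv_cols. Qed.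

Lemma size_upd (R : realType) k (n : 'I_k -> nat) (U : seq (kcol R n)) i (M : 'M[R]_(n i, size U)) :
  size (upd_mode M) = size U.
Proof. by rewrite size_map size_enum_ord. Qed.

Lemma modeseq_upd_in (R : realType) k (n : 'I_k -> nat) (U : seq (kcol R n)) i (M : 'M[R]_(n i, size U)) :
  modeseq (upd_mode M) i = map (fun j => col j M) (enum 'I_(size U)).
Proof. by rewrite /modeseq /upd_mode -map_comp; apply: eq_map => j /=; rewrite dfwith_in. Qed.

Lemma dfwith_other (R : realType) k (n : 'I_k -> nat) (c : kcol R n) i (w : 'cV[R]_(n i)) l :
  l != i -> @dfwith _ (fun l => 'cV[R]_(n l)) c i w l = c l.
Proof. by move=> H; rewrite dfwith_out // eq_sym. Qed.

Lemma modeseq_upd_out (R : realType) k (n : 'I_k -> nat) (U : seq (kcol R n)) i (M : 'M[R]_(n i, size U)) l :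
  l != i -> modeseq (upd_mode M) l = modeseq U l.
Proof.
move=> H; rewrite -[RHS]enum_nth_mode /modeseq /upd_mode -map_comp.
by apply: eq_map => j /=; rewrite dfwith_other.
Qed.

Lemma nth_upd (R : realType) k (n : 'I_k -> nat) (U : seq (kcol R n)) i (M : 'M[R]_(n i, size U)) (j : 'I_(size U)) :
  nth (Defs.col0 R n) (upd_mode M) j = @dfwith _ (fun l => 'cV[R]_(n l)) (nth (Defs.col0 R n) U j) i (col j M).
Proof. by rewrite (nth_map j) ?size_enum_ord // nth_ord_enum. Qed.

Lemma fobj_nth (R : realType) k (n : 'I_k -> nat) (A : tensor R n) (U : seq (kcol R n)) :
  fobj A U = \sum_(j < size U) tau A (nth (Defs.col0 R n) U j) ^+ 2.
Proof. by rewrite /fobj (big_nth (Defs.col0 R n)) big_mkord. Qed.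

Lemma fobj_upd (R : realType) k (n : 'I_k -> nat) (A : tensor R n) (U : seq (kcol R n)) i (M : 'M[R]_(n i, size U)) :
  fobj A (upd_mode M) = \sum_(j < size U)
     tau A (@dfwith _ (fun l => 'cV[R]_(n l)) (nth (Defs.col0 R n) U j) i (col j M)) ^+ 2.
Proof.
by rewrite /fobj big_map big_enum.
Qed.


Lemma trace_X (R : realType) k (n : 'I_k -> nat) (A : tensor R n) (U : seq (kcol R n)) i
   (Q : 'M[R]_(n i, size U)) :
  \tr (Q^T *m (Vmat A U i *m diag_mx (lamrow A U))) =
  \sum_(j < size U) tau A (@dfwith _ (fun l => 'cV[R]_(n l)) (nth (Defs.col0 R n) U j) i (col j Q))
      * tau A (nth (Defs.col0 R n) U j).
Proof.
rewrite /mxtrace; apply: eq_bigr => j _.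
rewrite mxE tau_dfwith /dotv mulr_suml; apply: eq_bigr => a _.
rewrite mul_mx_diag !mxE; exact: mulrA.
Qed.

Lemma trace_X_self (R : realType) k (n : 'I_k -> nat) (A : tensor R n) (U : seq (kcol R n)) i :
  \tr ((mx_of U i)^T *m (Vmat A U i *m diag_mx (lamrow A U))) = fobj A U.
Proof.
rewrite trace_X fobj_nth; apply: eq_bigr => j _.
by rewrite tau_dfwith col_mx_of -tau_split expr2.
Qed.

Lemma polar_gain (R : realType) k (n : 'I_k -> nat) (A : tensor R n) (U : seq (kcol R n)) i
   (Q : 'M[R]_(n i, size U)) :
  \tr ((mx_of U i)^T *m (Vmat A U i *m diag_mx (lamrow A U))) <=
  \tr (Q^T *m (Vmat A U i *m diag_mx (lamrow A U))) ->
  fobj A U <= fobj A (upd_mode Q).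
Proof.
rewrite trace_X_self trace_X fobj_upd => H.
set mu := fun j : 'I_(size U) => tau A (@dfwith _ (fun l => 'cV[R]_(n l)) (nth (Defs.col0 R n) U j) i (col j Q)).
set la := fun j : 'I_(size U) => tau A (nth (Defs.col0 R n) U j).
have E : fobj A U = \sum_j la j ^+ 2 by rewrite fobj_nth.
rewrite E in H *.
have H2 : \sum_j (2 * (mu j * la j) - la j ^+ 2) <= \sum_j mu j ^+ 2.
  by apply: ler_sum => j _; have := sqr_ge0 (mu j - la j); nra.
rewrite sumrB -mulr_sumr in H2.
change (\sum_j mu j * la j) with (\sum_(j < size U) tau A (@dfwith _ (fun l => 'cV[R]_(n l)) (nth (Defs.col0 R n) U j) i (col j Q)) * tau A (nth (Defs.col0 R n) U j)) in H2.
lra.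
Qed.

Lemma trTT_ge0 (R : realType) m p (N : 'M[R]_(m, p)) : 0 <= \tr (N^T *m N).
Proof. by apply: sumr_ge0 => j _; rewrite mulTmx_entry dotv_ge0. Qed.

Lemma tr_cross (R : realType) m p (Q M : 'M[R]_(m, p)) :
  orthonormal_cols Q -> orthonormal_cols M -> \tr (Q^T *m M) <= p%:R.
Proof.
move=> HQ HM; have := trTT_ge0 (Q - M).
rewrite (raddfB (@trmx _ m p)) /= mulmxBl !mulmxBr HQ HM !(raddfB (@mxtrace _ p)) /= mxtrace1.
rewrite -[M^T *m Q]trmxK trmx_mul trmxK mxtrace_tr; lra.
Qed.

Lemma polar_step_ok (R : realType) k (n : 'I_k -> nat) (A : tensor R n) eps i (U U' : seq (kcol R n)) :
  0 <= eps -> ONv (modeseq U i) -> polar_step A eps i U U' ->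
  [/\ size U' = size U, fobj A U <= fobj A U', ONv (modeseq U' i)
    & forall l, l != i -> modeseq U' l = modeseq U l].
Proof.
move=> he /ON_mx HM; rewrite /polar_step.
set X := Vmat A U i *m diag_mx (lamrow A U).
move=> [Q [[HQ HQmax] [Hs Hns]]].
suff key : forall Q' : 'M[R]_(n i, size U), orthonormal_cols Q' ->
    \tr ((mx_of U i)^T *m X) <= \tr (Q'^T *m X) -> U' = upd_mode Q' ->
  [/\ size U' = size U, fobj A U <= fobj A U', ONv (modeseq U' i)
    & forall l, l != i -> modeseq U' l = modeseq U l].
  case: (classic (small_eig (Q^T *m X) eps)) => [/Hs [Q2 [[HQ2 HQ2max] E]] | /Hns E].
    apply: (key Q2 HQ2 _ E).
    have := HQ2max _ HM; rewrite !mulmxDr !mxtraceD -!scalemxAr !mxtraceZ HM mxtrace1.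
    have := tr_cross HQ2 HM; nra.
  exact: (key Q HQ (HQmax _ HM) E).
move=> Q' HQ' Hle ->; split.
- exact: size_upd.
- exact: polar_gain.
- by rewrite modeseq_upd_in; apply/ONv_cols.
- by move=> l; apply: modeseq_upd_out.
Qed.


Lemma als_scalar (R : realType) (la s uu : R) : 0 <= s -> uu <= 1 -> la ^+ 2 <= uu * s ->
  la ^+ 2 <= (Num.sg la / Num.sqrt s * s) ^+ 2 /\ (Num.sg la / Num.sqrt s) ^+ 2 * s <= 1.
Proof.
move=> s0 u1 H.
have [sz|sp] := eqVneq s 0.
  rewrite sz !mulr0 expr0n /=; rewrite sz mulr0 in H; split => //; lra.
have sp' : 0 < s by rewrite lt_def sp s0.
set q := Num.sqrt s.
have qp : 0 < q by rewrite sqrtr_gt0.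
have sq : s = q ^+ 2 by rewrite sqr_sqrtr.
have E1 : (Num.sg la / q * s) ^+ 2 = Num.sg la ^+ 2 * s.
  by rewrite sq; field; rewrite gt_eqF.
have E2 : (Num.sg la / q) ^+ 2 * s = Num.sg la ^+ 2.
  by rewrite sq; field; rewrite gt_eqF.
rewrite E1 E2 sqr_sg.
have [lz|lnz] := eqVneq la 0.
  by rewrite lz /= expr0n /= mul0r; split => //; lra.
rewrite /= mul1r; split; last by [].
have : uu * s <= s by nra.
lra.
Qed.

Definition colok (R : realType) k (n : 'I_k -> nat) (smax : 'I_k) (c : kcol R n) : bool :=
  [forall l : 'I_k, (smax < l)%N ==> (dotv (c l) (c l) <= 1)].

Definition als_g (R : realType) k (n : 'I_k -> nat) (A : tensor R n) (smax : 'I_k) :=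
  (fun (c : kcol R n) (i : 'I_k) =>
           if (smax < i)%N then
             @dfwith _ (fun l => 'cV[R]_(n l)) c i
               ((Num.sg (tau A c) / vnorm (taui A c i)) *: taui A c i)
           else c).

Lemma als_g_ok (R : realType) k (n : 'I_k -> nat) (A : tensor R n) (smax : 'I_k) c i :
  colok smax c ->
  [/\ colok smax (als_g A smax c i), tau A c ^+ 2 <= tau A (als_g A smax c i) ^+ 2
    & forall l : 'I_k, (l <= smax)%N -> als_g A smax c i l = c l].
Proof.
move=> hc; rewrite /als_g; case: ifP => hi; last by split.
set v := taui A c i.
have hv : vnorm v = Num.sqrt (dotv v v).
  by rewrite /vnorm /dotv; congr Num.sqrt; apply: eq_bigr => a _; rewrite expr2.
have Hu : dotv (c i) (c i) <= 1 by move/forallP: hc => /(_ i) /implyP /(_ hi).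
set la := tau A c.
have Hla : la = dotv (c i) v by rewrite /la (tau_split _ _ i).
have CS := cauchy_schwarz (c i) v; rewrite -Hla in CS.
have [H1 H2] := als_scalar (dotv_ge0 v) Hu CS.
rewrite hv; split.
- apply/forallP => l; apply/implyP => hl.
  case: (eqVneq l i) => [->|ne].
    rewrite dfwith_in dotvZl dotvC dotvZl mulrA -expr2; exact: H2.
  rewrite dfwith_other0 //; by move/forallP: hc => /(_ l) /implyP /(_ hl).
- by rewrite tau_dfwith dotvZl.
- move=> l hl; rewrite dfwith_other0 //; apply/eqP => E; move: hl; by rewrite E leqNgt hi.
Qed.

Lemma als_fold (R : realType) k (n : 'I_k -> nat) (A : tensor R n) (smax : 'I_k) s c :
  colok smax c ->
  [/\ colok smax (foldl (als_g A smax) c s), tau A c ^+ 2 <= tau A (foldl (als_g A smax) c s) ^+ 2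
    & forall l : 'I_k, (l <= smax)%N -> foldl (als_g A smax) c s l = c l].
Proof.
elim: s c => [|i s IH] c hc /=; first by split.
have [h1 h2 h3] := als_g_ok A i hc; have [h1' h2' h3'] := IH _ h1.
split => //; first exact: le_trans h2 h2'.
by move=> l hl; rewrite h3' // h3.
Qed.

Lemma als_ok (R : realType) k (n : 'I_k -> nat) (A : tensor R n) (smax : 'I_k) c :
  colok smax c ->
  [/\ colok smax (als_update A smax c), tau A c ^+ 2 <= tau A (als_update A smax c) ^+ 2
    & forall l : 'I_k, (l <= smax)%N -> als_update A smax c l = c l].
Proof. exact: als_fold. Qed.


Definition Inv (R : realType) k (n : 'I_k -> nat) (smax : 'I_k) (U : seq (kcol R n)) : Prop :=
  (forall l : 'I_k, (l <= smax)%N -> ONv (modeseq U l)) /\ all (colok smax) U.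

Lemma nth_modeseq (R : realType) k (n : 'I_k -> nat) (U : seq (kcol R n)) l j :
  (j < size U)%N -> nth (Defs.col0 R n l) (modeseq U l) j = nth (Defs.col0 R n) U j l.
Proof. by move=> hj; rewrite (nth_map (Defs.col0 R n)). Qed.

Lemma colok_transfer (R : realType) k (n : 'I_k -> nat) (smax : 'I_k) (U U' : seq (kcol R n)) :
  size U' = size U -> (forall l : 'I_k, (smax < l)%N -> modeseq U' l = modeseq U l) ->
  all (colok smax) U -> all (colok smax) U'.
Proof.
move=> hs hm /(all_nthP (Defs.col0 R n)) H; apply/(all_nthP (Defs.col0 R n)) => j hj.
have hj' : (j < size U)%N by rewrite -hs.
have := H j hj'; move=> /forallP H2; apply/forallP => l; apply/implyP => hl.
have := H2 l; rewrite hl /= -!nth_modeseq // hm //.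
Qed.

Lemma fobj_ge0 (R : realType) k (n : 'I_k -> nat) (A : tensor R n) (U : seq (kcol R n)) :
  0 <= fobj A U.
Proof. by apply: sumr_ge0 => c _; apply: sqr_ge0. Qed.

Lemma fobj_cons (R : realType) k (n : 'I_k -> nat) (A : tensor R n) c (U : seq (kcol R n)) :
  fobj A (c :: U) = tau A c ^+ 2 + fobj A U.
Proof. by rewrite /fobj big_cons. Qed.

Lemma mask_ok (R : realType) k (n : 'I_k -> nat) (A : tensor R n) (smax : 'I_k) m (U : seq (kcol R n)) :
  fobj A (mask m U) <= fobj A U /\ (size (mask m U) <= size U)%N.
Proof.
elim: U m => [|c U IH] m; first by rewrite mask0.
case: m => [|b m] /=.
  by split => //; rewrite {1}/fobj big_nil; apply: fobj_ge0.
have [h1 h2] := IH m.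
case: b; rewrite !fobj_cons /=; split => //.
- by rewrite lerD2l.
- have := sqr_ge0 (tau A c); lra.
- exact: leqW.
Qed.

Lemma Inv_mask (R : realType) k (n : 'I_k -> nat) (smax : 'I_k) m (U : seq (kcol R n)) :
  Inv smax U -> Inv smax (mask m U).
Proof.
move=> [H1 H2]; split; last exact: all_mask.
move=> l hl; have := H1 l hl; rewrite /modeseq map_mask; case/andP => h1 h2.
by rewrite /ONv all_mask // pairwise_mask.
Qed.

Lemma fobj_le (R : realType) k (n : 'I_k -> nat) (A : tensor R n) (x : R) (s : seq (kcol R n)) :
  all (fun c => tau A c ^+ 2 <= x) s -> fobj A s <= (size s)%:R * x.
Proof.
elim: s => [|c s IH] /=; first by rewrite /fobj big_nil mul0r.
case/andP => h1 /IH h2; rewrite fobj_cons -[(size s).+1]addn1 natrD mulrDl mul1r; lra.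
Qed.

Lemma fobj_lt (R : realType) k (n : 'I_k -> nat) (A : tensor R n) (x : R) (s : seq (kcol R n)) :
  (0 < size s)%N -> all (fun c => tau A c ^+ 2 < x) s -> fobj A s < (size s)%:R * x.
Proof.
case: s => [|c s] //= _ /andP [h1 h2].
have h3 : fobj A s <= (size s)%:R * x.
  by apply: fobj_le; apply: sub_all h2 => d /ltW.
rewrite fobj_cons -[(size s).+1]addn1 natrD mulrDl mul1r; lra.
Qed.

Lemma trunc_ok (R : realType) k (n : 'I_k -> nat) (A : tensor R n) (smax : 'I_k) kappa
    (prev cur : seq (kcol R n)) :
  0 < kappa -> size prev = size cur ->
  (forall l : 'I_k, l != smax -> modeseq cur l = modeseq prev l) ->
  Inv smax cur ->
  [/\ Inv smax (truncate A smax kappa prev cur),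
      fobj A (truncate A smax kappa prev cur) <= fobj A cur,
      (size (truncate A smax kappa prev cur) <= size cur)%N,
      (size (truncate A smax kappa prev cur) = size cur -> truncate A smax kappa prev cur = cur)
    & all (fun c => kappa ^+ 2 <= tau A c ^+ 2) (truncate A smax kappa prev cur) /\
      ((0 < size cur)%N -> (size cur)%:R * kappa ^+ 2 <= fobj A cur ->
      (0 < size (truncate A smax kappa prev cur))%N)].
Proof.
move=> kp hs hm hI.
set z := zip prev cur.
have hz : map snd z = cur by rewrite /z -/(unzip2 _) unzip2_zip // hs.
have hsz : size z = size cur by rewrite /z size_zip hs minnn.
have hnz : forall j, (j < size cur)%N ->
    nth (Defs.col0 R n, Defs.col0 R n) z j = (nth (Defs.col0 R n) prev j, nth (Defs.col0 R n) cur j).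
  by move=> j _; rewrite /z nth_zip.
have Hsum : forall j, (j < size cur)%N ->
    \sum_(a < n smax) nth (Defs.col0 R n) cur j smax a 0 * taui A (nth (Defs.col0 R n) prev j) smax a 0
    = tau A (nth (Defs.col0 R n) cur j).
  move=> j hj.
  have E : taui A (nth (Defs.col0 R n) prev j) smax = taui A (nth (Defs.col0 R n) cur j) smax.
    apply: taui_ext => l hl.
    by rewrite -!nth_modeseq ?hs // hm.
  by rewrite E (tau_split _ _ smax).
have hT : truncate A smax kappa prev cur = mask (map (fun pc : kcol R n * kcol R n =>
     kappa <= `| \sum_(a < n smax) pc.2 smax a 0 * taui A pc.1 smax a 0 |) z) cur.
  by rewrite /truncate filter_mask map_mask hz.
have [hm1 hm2] := mask_ok A smax (map (fun pc : kcol R n * kcol R n =>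
     kappa <= `| \sum_(a < n smax) pc.2 smax a 0 * taui A pc.1 smax a 0 |) z) cur.
split.
- by rewrite hT; apply: Inv_mask.
- by rewrite hT.
- by rewrite hT.
- rewrite /truncate size_map size_filter => /eqP; rewrite -hsz -all_count => /all_filterP ->.
  exact: hz.
split.
- rewrite /truncate all_map all_filter; apply/(all_nthP (Defs.col0 R n, Defs.col0 R n)) => j hj.
  rewrite hsz in hj; rewrite hnz //= Hsum //; apply/implyP => H.
  have := real_normK (num_real (tau A (nth (Defs.col0 R n) cur j))); have := normr_ge0 (tau A (nth (Defs.col0 R n) cur j)); nra.
- move=> hc hb; rewrite /truncate size_map size_filter -has_count.
  apply/negPn/negP; rewrite -all_predC => hall.
  have : fobj A cur < (size cur)%:R * kappa ^+ 2.
    apply: fobj_lt => //; rewrite -hz all_map.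
    apply/(all_nthP (Defs.col0 R n, Defs.col0 R n)) => j hj.
    move/(all_nthP (Defs.col0 R n, Defs.col0 R n)): hall => /(_ j hj).
    rewrite hsz in hj; rewrite hnz //= Hsum // -ltNge => H.
    have := real_normK (num_real (tau A (nth (Defs.col0 R n) cur j))); have := normr_ge0 (tau A (nth (Defs.col0 R n) cur j)); nra.
  lra.
Qed.


Lemma als_map_ok (R : realType) k (n : 'I_k -> nat) (A : tensor R n) (smax : 'I_k) (x : R)
    (T : seq (kcol R n)) :
  all (colok smax) T ->
  [/\ all (colok smax) (map (als_update A smax) T),
      fobj A T <= fobj A (map (als_update A smax) T),
      (forall l : 'I_k, (l <= smax)%N -> modeseq (map (als_update A smax) T) l = modeseq T l)
    & all (fun c => x <= tau A c ^+ 2) T -> (size T)%:R * x <= fobj A (map (als_update A smax) T)].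
Proof.
elim: T => [|c T IH] /=.
  by move=> _; split => //; rewrite /fobj big_nil mul0r.
move=> /andP [hc hT]; have [h1 h2 h3] := als_ok A hc; have [i1 i2 i3 i4] := IH hT.
split.
- by rewrite h1 i1.
- by rewrite !fobj_cons lerD.
- by move=> l hl; have := i3 l hl; rewrite /modeseq /= h3 // => ->.
- case/andP => hx hall; rewrite fobj_cons -[(size T).+1]addn1 natrD mulrDl mul1r.
  have := i4 hall; lra.
Qed.

Lemma chain_ok (R : realType) k (n : 'I_k -> nat) (A : tensor R n) eps (smax : 'I_k)
    (U : seq (kcol R n)) (curs : nat -> seq (kcol R n)) :
  0 <= eps -> Inv smax U -> curs 0%N = U ->
  (forall i : 'I_k, (i <= smax)%N -> polar_step A eps i (curs i) (curs i.+1)) ->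
  forall m, (m <= smax.+1)%N ->
  [/\ Inv smax (curs m), size (curs m) = size U & fobj A U <= fobj A (curs m)].
Proof.
move=> he hI c0 hp; elim => [|m IH] hm; first by rewrite c0.
have hm' : (m <= smax)%N by [].
have [[IH1 IH1'] IH2 IH3] := IH (ltnW hm).
pose i : 'I_k := Ordinal (leq_ltn_trans hm' (ltn_ord smax)).
have [p1 p2 p3 p4] := polar_step_ok he (IH1 i hm') (hp i hm').
split.
- split.
    move=> l hl; case: (eqVneq l i) => [->|ne]; first exact: p3.
    by rewrite p4 //; apply: IH1.
  apply: colok_transfer IH1' => //; try exact: p1.
  by move=> l hl; apply: p4; apply/eqP => E; move: hl; rewrite E /= ltnNge hm'.
- by rewrite -IH2.
- exact: le_trans IH3 p2.
Qed.

Lemma step_ok (R : realType) k (n : 'I_k -> nat) (A : tensor R n) (smax : 'I_k) eps kappa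
    (U U' : seq (kcol R n)) :
  0 <= eps -> 0 < kappa -> Inv smax U -> iapd_step A smax eps kappa U U' ->
  [/\ Inv smax U', (size U' <= size U)%N, (size U' = size U -> fobj A U <= fobj A U')
    & ((0 < size U)%N -> (size U)%:R * kappa ^+ 2 <= fobj A U ->
       (0 < size U')%N /\ (size U')%:R * kappa ^+ 2 <= fobj A U')].
Proof.
move=> he kp hI [curs [c0 [hp ->]]].
have [a1 a2 a3] := chain_ok he hI c0 hp (leqnSn smax).
have [b1 b2 b3] := chain_ok he hI c0 hp (leqnn smax.+1).
have [q1 q2 q3 q4] := polar_step_ok he (a1.1 smax (leqnn _)) (hp smax (leqnn _)).
have hs : size (curs smax) = size (curs smax.+1) by rewrite a2 b2.
have [t1 t2 t3 t4 [t5 t6]] := trunc_ok A kp hs q4 b1.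
have [m1 m2 m3 m4] := als_map_ok A (kappa ^+ 2) t1.2.
split.
- split; last exact: m1.
  by move=> l hl; rewrite m3 //; apply: t1.1.
- by rewrite size_map -b2.
- rewrite size_map => hsz.
  have hT := t4 (etrans hsz (esym b2)).
  apply: le_trans b3 _; rewrite -{1}hT; exact: m2.
- move=> hpos hb.
  have hT0 : (0 < size (truncate A smax kappa (curs smax) (curs smax.+1)))%N.
    by apply: t6; rewrite b2 //; exact: le_trans hb b3.
  by rewrite size_map; split => //; apply: m4.
Qed.

Lemma noninc_mono (f : nat -> nat) : (forall p, (f p.+1 <= f p)%N) ->
  forall p q, (p <= q)%N -> (f q <= f p)%N.
Proof.
move=> H p q /subnKC <-; elim: (q - p)%N => [|d IH]; first by rewrite addn0.
by rewrite addnS; apply: leq_trans (H _) IH.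
Qed.

Lemma noninc_stable (f : nat -> nat) : (forall p, (f p.+1 <= f p)%N) ->
  exists N, forall p, (N <= p)%N -> f p = f N.
Proof.
suff : forall v (g : nat -> nat), (forall p, (g p.+1 <= g p)%N) -> (g 0 <= v)%N ->
  exists N, forall p, (N <= p)%N -> g p = g N.
  by move=> H Hf; apply: (H (f 0%N)).
elim => [|v IH] g Hg Hv.
  exists 0%N => p _; have := noninc_mono Hg (leq0n p); lia.
case: (classic (exists p, (g p < g 0)%N)) => [[p hp] | hn].
  have Hg' : forall q, (g (p + q.+1) <= g (p + q))%N by move=> q; rewrite addnS.
  have Hv' : (g (p + 0)%N <= v)%N by rewrite addn0; lia.
  have [N HN] := IH (fun q => g (p + q)%N) Hg' Hv'.
  exists (p + N)%N => q hq.
  have := HN (q - p)%N; rewrite subnKC; last lia.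
  by move=> ->; last lia.
exists 0%N => q _; apply/eqP; rewrite eqn_leq (noninc_mono Hg (leq0n q)) /=.
by rewrite leqNgt; apply/negP => h; apply: hn; exists q.
Qed.

Unset Implicit Arguments. Set Strict Implicit.

(* smax : 'I_k is the 0-based index of mode s, i.e. s = smax + 1 (so 1 <= s <= k). *)
Theorem proposition5p5 (R : realType) (k : nat) (n : 'I_k -> nat) (smax : 'I_k)
    (r : nat) (A : tensor R n) (eps kappa : R) (U : nat -> seq (kcol R n)) :
  (3 <= k)%N ->
  (forall i : 'I_k, (i <= smax)%N -> (r <= n i)%N) ->
  A != 0 ->
  0 < eps ->
  init_ok smax r (U 0%N) ->
  0 < fobj A (U 0%N) ->
  0 < kappa -> kappa < Num.sqrt (fobj A (U 0%N) / r%:R) ->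
  (forall p, iapd_step A smax eps kappa (U p) (U p.+1)) ->
  exists t : nat,
    (0 < t <= r)%N /\
    (exists N : nat, forall p, (N <= p)%N -> size (U p) = t) /\
    (exists N0 : nat, forall p, (N0 <= p)%N -> fobj A (U p) <= fobj A (U p.+1)).
Proof.
move=> _ _ _ he [hsz [hon hals]] hf kp hks hstep.
have he' : 0 <= eps by apply: ltW.
have hr : (0 < r)%N.
  case: r hsz hks => // hsz _; move: hf; rewrite /fobj.
  by case: (U 0%N) hsz => // _; rewrite big_nil ltxx.
have hrR : 0 < r%:R :> R by rewrite ltr0n.
have Inv0 : Inv smax (U 0%N).
  split; first by move=> l hl; apply/ON_mx; apply: hon.
  apply/(all_nthP (Defs.col0 R n)) => j hj; apply/forallP => l; apply/implyP => hl.
  have := hals l hl (Ordinal hj); rewrite col_mx_of /=.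
  set v := nth (Defs.col0 R n) (U 0%N) j l.
  have hv : vnorm v = Num.sqrt (dotv v v).
    by rewrite /vnorm /dotv; congr Num.sqrt; apply: eq_bigr => a _; rewrite expr2.
  rewrite hv => h1.
  have := sqr_sqrtr (dotv_ge0 v); rewrite h1 expr1n => <-; exact: lexx.
have hb0 : (size (U 0%N))%:R * kappa ^+ 2 <= fobj A (U 0%N).
  rewrite hsz.
  have hq : 0 <= fobj A (U 0%N) / r%:R by apply: divr_ge0; [exact: ltW | exact: ltW].
  have := sqr_sqrtr hq; set q := Num.sqrt _ => hq2.
  have hk2 : kappa ^+ 2 < fobj A (U 0%N) / r%:R.
    by rewrite -hq2 !expr2; apply: ltr_pM => //; exact: ltW.
  have : fobj A (U 0%N) / r%:R * r%:R = fobj A (U 0%N) by rewrite divfK // gt_eqF.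
  nra.
have Hall : forall p, [/\ Inv smax (U p), (0 < size (U p))%N &
    (size (U p))%:R * kappa ^+ 2 <= fobj A (U p)].
  elim => [|p [IH1 IH2 IH3]]; first by split => //; rewrite hsz.
  have [s1 s2 s3 s4] := step_ok he' kp IH1 (hstep p).
  by have [h1 h2] := s4 IH2 IH3; split.
have Hdec : forall p, (size (U p.+1) <= size (U p))%N.
  by move=> p; have [h1 _ _] := Hall p; have [_ s2 _ _] := step_ok he' kp h1 (hstep p).
have [N HN] := noninc_stable Hdec.
exists (size (U N)); split; last split.
- have [_ h _] := Hall N; rewrite h /=.
  by rewrite -hsz; apply: (noninc_mono Hdec (leq0n N)).
- by exists N.
- exists N => p hp.
  have [h1 _ _] := Hall p; have [_ _ s3 _] := step_ok he' kp h1 (hstep p).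
  apply: s3; rewrite HN ?HN //; exact: leqW.
Qed.
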